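(* Let $\tilde{\Phi}:\mathbb{R}_{++}^{n\times m}\to\mathbb{R}$ be a differentiable convex function which is positively 1-homogeneous ($\tilde{\Phi}(tA)=t\tilde{\Phi}(A)$ for all $t>0$, $A\in\mathbb{R}_{++}^{n\times m}$) and strictly convex on $\mathcal{P}_{nm-1}$, and suppose that its gradient $S:\mathbb{R}_{++}^{n\times m}\to\mathbb{R}^{n\times m}$, $S^{ij}(A)=\partial\tilde{\Phi}/\partial A_{ij}(A)$, restricted to $\mathcal{P}_{nm-1}$ and composed with the quotient map, induces a bijection $\mathcal{P}_{nm-1}\to\mathbb{R}^{n\times m}/\langle 1_{nm}\rangle$. Let $\Phi$ be the restriction of $\tilde{\Phi}$ to $\mathcal{P}_{nm-1}$. Then for each $p\in\mathcal{P}_{n-1}$, $q\in\mathcal{P}_{m-1}$, the problem of minimizing $\Phi(P)$ over $P\in\Pi(p,q)$ has a unique solution $P^*(p,q)\in\Pi(p,q)$, and there exists $(\alpha^*,\beta^* )\in\mathbb{R}^n\times\mathbb{R}^m$ with \[ S^{ij}(P^*(p,q))=(\alpha^* )^i+(\beta^* )^j,\qquad 1\le i\le n,\ 1\le j\le m. \]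
   Context: $\mathbb{R}_{++}^{n\times m}$ denotes the set of real $n\times m$ matrices with all entries strictly positive. $\mathcal{P}_{n-1}=\{p\in\mathbb{R}^n:\sum_i p_i=1,\ p_i>0\}$, similarly $\mathcal{P}_{m-1}$, and $\mathcal{P}_{nm-1}=\{P\in\mathbb{R}_{++}^{n\times m}:\sum_{i,j}P_{ij}=1\}$. $\Pi(p,q)=\{P\in\mathcal{P}_{nm-1}:\sum_j P_{ij}=p_i\ \forall i,\ \sum_i P_{ij}=q_j\ \forall j\}$. $1_{nm}$ is the $n\times m$ matrix with all entries equal to $1$, and $\mathbb{R}^{n\times m}/\langle 1_{nm}\rangle$ is the quotient vector space by the relation $u\sim v\iff u-v=c\,1_{nm}$ for some $c\in\mathbb{R}$. *)

(* Defs.v *)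
From HB Require Import structures.
From mathcomp Require Import all_boot all_order all_algebra.
From mathcomp Require Import all_classical all_reals all_analysis.
Set Implicit Arguments. Unset Strict Implicit. Unset Printing Implicit Defensive.
Import Order.TTheory GRing.Theory Num.Theory.
Import numFieldNormedType.Exports.
Local Open Scope ring_scope.

Section Defs.
Variables (R : realType) (n m : nat).

Definition posmx (A : 'M[R]_(n, m)) : Prop := forall i j, 0 < A i j.

Definition simplexmx (A : 'M[R]_(n, m)) : Prop :=
  posmx A /\ \sum_(i < n) \sum_(j < m) A i j = 1.

Definition simplexv (k : nat) (p : 'I_k -> R) : Prop :=
  (forall i, 0 < p i) /\ \sum_(i < k) p i = 1.

Definition coupling (p : 'I_n -> R) (q : 'I_m -> R) (P : 'M[R]_(n, m)) : Prop :=
  simplexmx P /\ (forall i, \sum_(j < m) P i j = p i)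
              /\ (forall j, \sum_(i < n) P i j = q j).

Definition gradmx (Phi : 'M[R]_(n, m) -> R) (A : 'M[R]_(n, m)) : 'M[R]_(n, m) :=
  \matrix_(i, j) ('D_(delta_mx i j) Phi A).

End Defs.

(* Main.v *)
Require Import Defs.
From HB Require Import structures.
From mathcomp Require Import all_boot all_order all_algebra.
From mathcomp Require Import all_classical all_reals all_analysis.
From mathcomp Require Import ring lra.
Import Order.TTheory GRing.Theory Num.Theory.
Import numFieldNormedType.Exports.
Local Open Scope ring_scope.

Section T.
Local Open Scope classical_set_scope.
Variables (R : realType) (n m : nat).

Lemma vec_mx_cont : continuous (@vec_mx R n m).
Proof.
move=> v; apply/(@cvg_ballP _ _ _ (nbhs v) (nbhs_filter v)) => e e0; near=> w.
split => // i j; rewrite !mxE.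
have : ball v e w.
  near: w. apply: (@nbhsx_ballx _ _ v e e0).
by case=> _; apply.
Unshelve. all: by end_near.
Qed.

Lemma mx_box_compact (M : R) :
  compact [set A : 'M[R]_(n, m) | forall i j, `|A i j| <= M].
Proof.
have Kc : compact [set v : 'rV[R]_(n * m) | forall k, `[- M, M]%classic (v ord0 k)].
  by apply: (@rV_compact _ _ (fun=> `[- M, M]%classic)) => _; exact: segment_compact.
have -> : [set A : 'M[R]_(n, m) | forall i j, `|A i j| <= M] =
   vec_mx @` [set v : 'rV[R]_(n * m) | forall k, `[- M, M]%classic (v ord0 k)].
  apply/seteqP; split => [A HA|_ [v Hv <-] i j].
    exists (@mxvec R n m A); last by rewrite mxvecK.
    move=> k; case/mxvec_indexP: k => i j.
    by rewrite /= in_itv /= mxvecE -ler_norml.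
  by rewrite mxE ler_norml; have := Hv (mxvec_index i j); rewrite /= in_itv.
apply: continuous_compact => //.
by apply: continuous_subspaceT; exact: vec_mx_cont.
Qed.

Lemma cluster_le (F : set_system 'M[R]_(n, m)) (x : 'M[R]_(n, m))
  (h : 'M[R]_(n, m) -> R) (c : R) :
  Filter F -> cluster F x -> {for x, continuous h} ->
  (forall e, 0 < e -> \forall y \near F, h y <= c + e) -> h x <= c.
Proof.
move=> FF cl hc Hev; rewrite leNgt; apply/negP => hlt.
pose e := (h x - c) / 2.
have e0 : 0 < e by rewrite divr_gt0 // subr_gt0.
have N : \forall y \near x, h x - e < h y.
  by apply: (@cvgr_gt _ _ (nbhs x) _ h (h x) hc); rewrite ltrBlDr ltrDl.
have [y [Fy Ny]] := cl _ _ (Hev e e0) N.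
move: Fy Ny; rewrite /e; lra.
Qed.

Implicit Types U V A B : 'M[R]_(n, m).

Definition mdot U A : R := \sum_i \sum_j U i j * A i j.
Local Notation dot := mdot.

Lemma dotDl U V A : dot (U + V) A = dot U A + dot V A.
Proof.
rewrite /mdot -big_split; apply: eq_bigr => i _; rewrite -big_split.
by apply: eq_bigr => j _; rewrite !mxE mulrDl.
Qed.
Lemma dotZl c U A : dot (c *: U) A = c * dot U A.
Proof.
rewrite /mdot mulr_sumr; apply: eq_bigr => i _; rewrite mulr_sumr.
by apply: eq_bigr => j _; rewrite !mxE mulrA.
Qed.
Lemma dotDr U A B : dot U (A + B) = dot U A + dot U B.
Proof.
rewrite /mdot -big_split; apply: eq_bigr => i _; rewrite -big_split.
by apply: eq_bigr => j _; rewrite !mxE mulrDr.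
Qed.
Lemma dotZr c U A : dot U (c *: A) = c * dot U A.
Proof.
rewrite /mdot mulr_sumr; apply: eq_bigr => i _; rewrite mulr_sumr.
by apply: eq_bigr => j _; rewrite !mxE mulrCA.
Qed.
Lemma dotNl U A : dot (- U) A = - dot U A.
Proof. by rewrite -scaleN1r dotZl mulN1r. Qed.
Lemma dotNr U A : dot U (- A) = - dot U A.
Proof. by rewrite -scaleN1r dotZr mulN1r. Qed.
Lemma dotBl U V A : dot (U - V) A = dot U A - dot V A.
Proof. by rewrite dotDl dotNl. Qed.
Lemma dotBr U A B : dot U (A - B) = dot U A - dot U B.
Proof. by rewrite dotDr dotNr. Qed.
Lemma dot1l A : dot (const_mx 1) A = \sum_i \sum_j A i j.
Proof. by apply: eq_bigr => i _; apply: eq_bigr => j _; rewrite mxE mul1r. Qed.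
Lemma dotC U A : dot U A = dot A U.
Proof. by apply: eq_bigr => i _; apply: eq_bigr => j _; rewrite mulrC. Qed.
Lemma dot_delta U k l : dot U (delta_mx k l) = U k l.
Proof.
rewrite /mdot (bigD1 k) //= (bigD1 l) //= !mxE !eqxx /= mulr1.
rewrite big1 ?addr0; last by move=> j /negbTE jl; rewrite mxE eqxx jl /= mulr0.
rewrite big1 ?addr0 // => i /negbTE ik; apply: big1 => j _.
by rewrite mxE ik /= mulr0.
Qed.

Lemma dot_cont U X : {for X, continuous (fun Y => dot U Y)}.
Proof.
have FX : Filter (nbhs X) := nbhs_filter X.
apply: (@cvg_big R^o 'I_n +%R 0 xpredT add_continuous _ (nbhs X)) => // i _.
apply: (@cvg_big R^o 'I_m +%R 0 xpredT add_continuous _ (nbhs X)) => // j _.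
apply: cvgM; first exact: cvg_cst.
exact: coord_continuous.
Qed.

Lemma le_sum2 (F : 'I_n -> 'I_m -> R) i j : (forall i j, 0 <= F i j) ->
  F i j <= \sum_i \sum_j F i j.
Proof.
move=> F0; rewrite (bigD1 i) //= (bigD1 j) //= -addrA lerDl.
by apply: addr_ge0; apply: sumr_ge0 => k _ //; apply: sumr_ge0.
Qed.

End T.

Set Implicit Arguments. Unset Strict Implicit.

Section Main.
Local Open Scope classical_set_scope.
Variables (R : realType) (n m : nat) (Phi : 'M[R]_(n, m) -> R).
Hypothesis Hdiff : forall A, posmx A -> differentiable Phi A.
Hypothesis Hconv : forall (A B : 'M[R]_(n, m)) (t : R), posmx A -> posmx B ->
     0 <= t <= 1 ->
     Phi ((1 - t) *: A + t *: B) <= (1 - t) * Phi A + t * Phi B.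
Hypothesis Hsconv : forall (A B : 'M[R]_(n, m)) (t : R), simplexmx A -> simplexmx B ->
     A != B -> 0 < t < 1 ->
     Phi ((1 - t) *: A + t *: B) < (1 - t) * Phi A + t * Phi B.
Hypothesis Hinj : forall (A B : 'M[R]_(n, m)) (c : R), simplexmx A -> simplexmx B ->
     gradmx Phi A - gradmx Phi B = c *: const_mx 1 -> A = B.
Hypothesis Hsurj : forall U : 'M[R]_(n, m), exists A : 'M[R]_(n, m), exists c : R,
     simplexmx A /\ gradmx Phi A = U + c *: const_mx 1.

Implicit Types U V W A B X : 'M[R]_(n, m).
Local Notation dot := (@mdot R n m).
Local Notation one := (const_mx 1 : 'M[R]_(n, m)).

Lemma derD A v : posmx A -> 'D_v Phi A = dot (gradmx Phi A) v.
Proof.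
move=> PA; rewrite deriveE; last exact: Hdiff.
rewrite {1}(matrix_sum_delta v) linear_sum; apply: eq_bigr => i _.
rewrite linear_sum; apply: eq_bigr => j _.
rewrite linearZ /= mxE -deriveE; last exact: Hdiff.
by rewrite mulrC.
Qed.

Lemma grad_ineq A B : posmx A -> posmx B ->
  Phi A + dot (gradmx Phi A) (B - A) <= Phi B.
Proof.
move=> PA PB; rewrite -derD // -lerBrDl.
have dA : derivable Phi A (B - A) := diff_derivable (Hdiff PA).
have := cvg_dnbhs_at_right dA.
move/cvgr_to_le; apply; near=> h.
have hpos : 0 < h by near: h; exact: nbhs_right_gt.
have h01 : 0 <= h <= 1.
  apply/andP; split; first exact/ltW.
  by apply/ltW; near: h; exact: nbhs_right_lt.
have := Hconv PA PB h01.
rewrite (_ : (1 - h) *: A + h *: B = h *: (B - A) + A); last first.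
  by apply/matrixP => i j; rewrite !mxE; ring.
move=> H.
rewrite /= ler_pdivrMl //.
by rewrite mulrBr; lra.
Unshelve. all: by end_near.
Qed.

Lemma sum1 A : simplexmx A -> dot one A = 1.
Proof. by case=> _ s; rewrite dot1l. Qed.
Lemma simplex_pos A : simplexmx A -> posmx A.
Proof. by case. Qed.
Lemma dot_one_simplex c A : simplexmx A -> dot (c *: one) A = c.
Proof. by move=> sA; rewrite dotZl sum1 // mulr1. Qed.

Lemma simplex_entry A i j : simplexmx A -> 0 <= A i j <= 1.
Proof.
move=> sA; have pA := simplex_pos sA; apply/andP; split; first exact/ltW.
case: sA => _ s; rewrite -s; apply: (@le_sum2 R n m (fun i j => A i j) i j) => k l; exact/ltW.
Qed.

Lemma dot_bound V A : simplexmx A -> `|dot V A| <= \sum_i \sum_j `|V i j|.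
Proof.
move=> sA; rewrite /mdot; apply: le_trans (ler_norm_sum _ _ _) _.
apply: ler_sum => i _; apply: le_trans (ler_norm_sum _ _ _) _.
apply: ler_sum => j _; rewrite normrM.
have /andP[a0 a1] := simplex_entry i j sA.
rewrite (ger0_norm a0) -[X in _ <= X]mulr1 ler_wpM2l //.
Qed.

Lemma simplex_comb A B t : simplexmx A -> simplexmx B -> 0 < t < 1 ->
  simplexmx ((1 - t) *: A + t *: B).
Proof.
move=> sA sB /andP[t0 t1]; split.
  move=> i j; rewrite !mxE; have := simplex_pos sA i j; have := simplex_pos sB i j.
  nra.
by rewrite -dot1l dotDr !dotZr !sum1 // !mulr1 subrK.
Qed.

Definition FU U : 'M[R]_(n, m) := proj1_sig (cid (Hsurj U)).
Lemma FU_spec U : exists c, simplexmx (FU U) /\ gradmx Phi (FU U) = U + c *: one.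
Proof. exact: (proj2_sig (cid (Hsurj U))). Qed.
Lemma FU_simplex U : simplexmx (FU U).
Proof. by have [c []] := FU_spec U. Qed.

Definition Phis U := dot U (FU U) - Phi (FU U).

Lemma FY U X : simplexmx X -> dot U X - Phis U <= Phi X.
Proof.
move=> sX; have [c [sF gF]] := FU_spec U.
have := grad_ineq (simplex_pos sF) (simplex_pos sX).
rewrite gF dotDl !dotBr (dot_one_simplex c sX) (dot_one_simplex c sF) /Phis.
lra.
Qed.

Lemma FU_uniq U A c : simplexmx A -> gradmx Phi A = U + c *: one -> A = FU U.
Proof.
move=> sA gA; have [c' [sF gF]] := FU_spec U.
apply: (Hinj (c := c - c') sA sF); rewrite gA gF.
by apply/matrixP => i j; rewrite !mxE; ring.
Qed.

Lemma Phis_shift U c : Phis (U + c *: one) = Phis U + c.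
Proof.
have [c' [sF gF]] := FU_spec U.
have e : FU (U + c *: one) = FU U.
  symmetry; apply: (FU_uniq (c := c' - c) sF); rewrite gF.
  by apply/matrixP => i j; rewrite !mxE; ring.
by rewrite /Phis e dotDl dot_one_simplex //; lra.
Qed.


Lemma key_dir W V r : (forall t, 0 < t < 1 -> r <= dot V (FU (W + t *: V))) ->
  r <= dot V (FU W).
Proof.
move=> Hr.
pose A t := FU (W + t *: V).
pose a := dot V (FU W).
pose SV := \sum_i \sum_j `|V i j|.
pose K := SV + `|a|.
have SV0 : 0 <= SV by apply: sumr_ge0 => i _; apply: sumr_ge0.
have K0 : 0 <= K by apply: addr_ge0.
have lb t : Phis W + t * a <= Phis (W + t *: V).
  have := FY (W + t *: V) (FU_simplex W); rewrite /Phis !dotDl !dotZl /a; lra.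
have bdV t : dot V (A t) <= SV.
  by apply: le_trans (ler_norm _) (dot_bound _ (FU_simplex _)).
have ba : - a <= `|a| by rewrite -normrN; exact: ler_norm.
have PhiA t : Phi (A t) = dot W (A t) + t * dot V (A t) - Phis (W + t *: V).
  by rewrite /Phis /A dotDl dotZl; lra.
have Gp : ProperFilter (A @ 0^'+) by apply: fmap_proper_filter.
have ev : forall (h : 'M[R]_(n, m) -> R) c,
    (forall t, 0 < t < 1 -> h (A t) <= c + t * K) ->
    forall e, 0 < e -> \forall y \near A @ 0^'+, h y <= c + e.
  move=> h c Hb e e0.
  have K1 : 0 < K + 1 by lra.
  change (\forall t \near 0^'+, h (A t) <= c + e).
  near=> t.
  have t0 : 0 < t by near: t; exact: nbhs_right_gt.
  have t1 : t < 1 by near: t; exact: nbhs_right_lt.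
  have te : t < e / (K + 1).
    by near: t; apply: nbhs_right_lt; rewrite divr_gt0.
  have t01 : 0 < t < 1 by rewrite t0 t1.
  have := Hb t t01.
  move: te; rewrite ltr_pdivlMr // mulrDr mulr1 => te.
  lra.
have Gbox : (A @ 0^'+) [set X | forall i j, `|X i j| <= 1].
  change (\forall t \near 0^'+, forall i j, `|A t i j| <= 1).
  apply: filterE => t i j.
  have /andP[a0 a1] := simplex_entry i j (FU_simplex (W + t *: V)).
  by rewrite ger0_norm.
have [x [_ clx]] := @mx_box_compact R n m 1 (A @ 0^'+) Gp Gbox.
have tK t : 0 < t < 1 -> 0 <= t * K.
  by case/andP => t0 _; apply: mulr_ge0 => //; exact: ltW.
have xnn i j : 0 <= x i j.
  suff : - x i j <= 0 by rewrite oppr_le0.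
  apply: (@cluster_le R n m (A @ 0^'+) x (fun X => - X i j) 0 _ clx).
    by apply: continuousN; exact: coord_continuous.
  apply: ev => t t01; have := tK t t01.
  have /andP[a0 _] := simplex_entry i j (FU_simplex (W + t *: V)).
  rewrite /A; lra.
have xsum1 : dot one x <= 1.
  apply: (@cluster_le R n m (A @ 0^'+) x (fun X => dot one X) 1 _ clx).
    exact: dot_cont.
  apply: ev => t t01; have := tK t t01.
  rewrite /A sum1; last exact: FU_simplex.
  lra.
have xsum2 : - dot one x <= - 1.
  apply: (@cluster_le R n m (A @ 0^'+) x (fun X => - dot one X) (- 1) _ clx).
    by apply: continuousN; exact: dot_cont.
  apply: ev => t t01; have := tK t t01.
  rewrite /A sum1; last exact: FU_simplex.
  lra.
have xc U : dot (U - W) x + (Phis W - Phis U) <= 0.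
  apply: (@cluster_le R n m (A @ 0^'+) x
     (fun X => dot (U - W) X + (Phis W - Phis U)) 0 _ clx).
    apply: continuousD; first exact: dot_cont.
    exact: cst_continuous.
  apply: ev => t t01; have := tK t t01.
  have t0 : 0 <= t by case/andP: t01 => t0 _; exact: ltW.
  have := FY U (FU_simplex (W + t *: V)).
  have := PhiA t; have := lb t.
  have := ler_wpM2l t0 (bdV t); have := ler_wpM2l t0 ba.
  rewrite /K mulrDr mulrN dotBl /A.
  lra.
have xpos : posmx x.
  move=> k l; rewrite lt_neqAle xnn andbT; apply/eqP => x0.
  have := xc (W - delta_mx k l).
  rewrite (_ : W - delta_mx k l - W = - delta_mx k l); last first.
    by rewrite addrAC subrr add0r.
  rewrite dotNl dotC dot_delta -x0.
  pose B := FU (W - delta_mx k l).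
  have := FY W (FU_simplex (W - delta_mx k l)).
  have e1 : Phis (W - delta_mx k l) = dot W B - B k l - Phi B.
    by rewrite /Phis dotBl [dot (delta_mx k l) _]dotC dot_delta.
  rewrite e1 -/B.
  have := simplex_pos (FU_simplex (W - delta_mx k l)) k l.
  rewrite -/B; lra.
have xe : Phi x + dot (- W) x <= - Phis W.
  apply: (@cluster_le R n m (A @ 0^'+) x
     (fun X => Phi X + dot (- W) X) (- Phis W) _ clx).
    apply: continuousD; last exact: dot_cont.
    exact: differentiable_continuous (Hdiff xpos).
  apply: ev => t t01; have := tK t t01.
  have t0 : 0 <= t by case/andP: t01 => t0 _; exact: ltW.
  have := PhiA t; have := lb t.
  have := ler_wpM2l t0 (bdV t); have := ler_wpM2l t0 ba.
  rewrite /K mulrDr mulrN dotNl /A.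
  lra.
have xs : simplexmx x.
  split => //; rewrite -dot1l; lra.
have xF : x = FU W.
  apply/eqP; apply/negPn/negP => neq.
  have h12 : 0 < (1 / 2 : R) < 1 by apply/andP; split; lra.
  have := Hsconv xs (FU_simplex W) neq h12.
  have := FY W (simplex_comb xs (FU_simplex W) h12).
  rewrite dotDr !dotZr.
  have : Phi (FU W) = dot W (FU W) - Phis W by rewrite /Phis; lra.
  move: xe; rewrite dotNl.
  lra.
have xg : - dot V x <= - r.
  apply: (@cluster_le R n m (A @ 0^'+) x (fun X => - dot V X) (- r) _ clx).
    by apply: continuousN; exact: dot_cont.
  apply: ev => t t01; have := tK t t01; have := Hr t t01.
  rewrite /A; lra.
by rewrite -xF; lra.
Unshelve. all: by end_near.
Qed.

Variables (p : 'I_n -> R) (q : 'I_m -> R).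
Hypotheses (Hp : simplexv p) (Hq : simplexv q).

Definition sepmx (a : 'I_n -> R) (b : 'I_m -> R) : 'M[R]_(n, m) :=
  \matrix_(i, j) (a i + b j).
Definition P0 : 'M[R]_(n, m) := \matrix_(i, j) (p i * q j).
Definition G W := dot W P0 - Phis W.
Definition Lsep W := exists a b, W = sepmx a b.

Lemma dot_sepE a b X : dot (sepmx a b) X =
  \sum_i a i * \sum_j X i j + \sum_j b j * \sum_i X i j.
Proof.
rewrite /mdot (eq_bigr (fun i => a i * \sum_j X i j + \sum_j b j * X i j)).
  rewrite big_split /= exchange_big /=; congr (_ + _).
  by apply: eq_bigr => j _; rewrite mulr_sumr.
move=> i _; rewrite mulr_sumr -big_split /=; apply: eq_bigr => j _.
by rewrite mxE mulrDl.
Qed.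

Lemma dot_sep_coupling a b X : coupling p q X ->
  dot (sepmx a b) X = \sum_i a i * p i + \sum_j b j * q j.
Proof.
case=> _ [rX cX]; rewrite dot_sepE; congr (_ + _).
  by apply: eq_bigr => i _; rewrite rX.
by apply: eq_bigr => j _; rewrite cX.
Qed.

Lemma P0_coupling : coupling p q P0.
Proof.
case: Hp => p0 p1; case: Hq => q0 q1.
have rows i : \sum_j P0 i j = p i.
  by under eq_bigr do rewrite mxE; rewrite -mulr_sumr q1 mulr1.
split; [split|split].
- by move=> i j; rewrite mxE mulr_gt0.
- by under eq_bigr do rewrite rows.
- exact: rows.
- by move=> j; under eq_bigr do rewrite mxE; rewrite -mulr_suml p1 mul1r.
Qed.

Lemma P0_simplex : simplexmx P0.
Proof. by case: P0_coupling. Qed.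

Lemma coupling_comb A B t : coupling p q A -> coupling p q B -> 0 < t < 1 ->
  coupling p q ((1 - t) *: A + t *: B).
Proof.
move=> [sA [rA cA]] [sB [rB cB]] t01; split; first exact: simplex_comb.
split.
  move=> i; under eq_bigr do rewrite !mxE.
  by rewrite big_split /= -!mulr_sumr rA rB; ring.
move=> j; under eq_bigr do rewrite !mxE.
by rewrite big_split /= -!mulr_sumr cA cB; ring.
Qed.

Lemma G_shift W c : G (W + c *: one) = G W.
Proof.
by rewrite /G dotDl dot_one_simplex ?Phis_shift; [lra | exact: P0_simplex].
Qed.

Lemma G_le W : G W <= Phi P0.
Proof. exact: (FY W P0_simplex). Qed.

Definition Xm i j : 'M[R]_(n, m) := 2^-1 *: P0 + 2^-1 *: delta_mx i j.

Lemma Xm_simplex i j : simplexmx (Xm i j).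
Proof.
split.
  move=> k l; rewrite !mxE.
  have := P0_coupling; case=> [[P0p _] _]; have := P0p k l; rewrite mxE => h.
  have : 0 <= ((k == i) && (l == j))%:R :> R by rewrite ler0n.
  lra.
rewrite -dot1l dotDr !dotZr dot_delta mxE sum1; last exact: P0_simplex.
lra.
Qed.

Lemma coerc W i j : G W <= 2^-1 * dot W P0 - 2^-1 * W i j + Phi (Xm i j).
Proof.
have := FY W (Xm_simplex i j); rewrite dotDr !dotZr dot_delta /G; lra.
Qed.

Lemma sep_sum1 (f : 'I_n -> R) i : \sum_k (k == i)%:R * f k = f i.
Proof.
rewrite (bigD1 i) //= eqxx mul1r big1 ?addr0 // => k /negbTE ->.
by rewrite mul0r.
Qed.

Lemma sep_sum2 (f : 'I_m -> R) j : \sum_k (k == j)%:R * f k = f j.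
Proof.
rewrite (bigD1 j) //= eqxx mul1r big1 ?addr0 // => k /negbTE ->.
by rewrite mul0r.
Qed.

Lemma ord_inhab k (f : 'I_k -> R) : \sum_(i < k) f i = 1 -> exists i : 'I_k, true.
Proof.
case: k f => [f|k f _]; last by exists ord0.
by rewrite big_ord0 => /eqP; rewrite eq_sym oner_eq0.
Qed.

Lemma dual_max : exists Wb, Lsep Wb /\ forall W, Lsep W -> G W <= G Wb.
Proof.
have [i0 _] := ord_inhab (proj2 Hp).
have [j0 _] := ord_inhab (proj2 Hq).
pose C := \sum_i \sum_j `|Phi (Xm i j) - G 0|.
pose D := \sum_i \sum_j (p i * q j)^-1.
have C0 : 0 <= C by apply: sumr_ge0 => i _; apply: sumr_ge0.
have pq_pos i j : 0 < p i * q j.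
  by case: Hp => p0 _; case: Hq => q0 _; rewrite mulr_gt0.
have D0 : 0 <= D.
  by apply: sumr_ge0 => i _; apply: sumr_ge0 => j _; rewrite invr_ge0 ltW.
pose Mb := 2 * C + 2 * C * D.
have CD0 : 0 <= 2 * C * D by rewrite mulr_ge0 // mulr_ge0.
have Mb0 : 0 <= Mb by rewrite /Mb; lra.
have box W : dot W P0 = 0 -> G 0 <= G W -> forall i j, `|W i j| <= Mb.
  move=> W0 GW.
  have up k l : W k l <= 2 * C.
    have := coerc W k l; rewrite W0.
    have : Phi (Xm k l) - G 0 <= C.
      apply: le_trans (ler_norm _) _.
      exact: (@le_sum2 R n m (fun i j => `|Phi (Xm i j) - G 0|) k l).
    lra.
  move=> i j; rewrite ler_norml; apply/andP; split; last first.
    by have := up i j; rewrite /Mb; lra.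
  have hs : dot (2 * C *: one - W) P0 = 2 * C.
    by rewrite dotBl W0 dot_one_simplex ?subr0 //; exact: P0_simplex.
  have H : (2 * C *: one - W) i j * P0 i j <= dot (2 * C *: one - W) P0.
    apply: (@le_sum2 R n m (fun k l => (2 * C *: one - W) k l * P0 k l) i j).
    move=> k l; rewrite !mxE mulr1; apply: mulr_ge0; last exact/ltW/pq_pos.
    by have := up k l; lra.
  rewrite hs !mxE mulr1 -ler_pdivlMr // in H.
  have inv_le : (p i * q j)^-1 <= D.
    apply: (@le_sum2 R n m (fun k l => (p k * q l)^-1) i j) => k l.
    by rewrite invr_ge0 ltW.
  have := ler_wpM2l (_ : 0 <= 2 * C) inv_le.
  have C2 : 0 <= 2 * C by lra.
  move=> /(_ C2) H2.
  rewrite /Mb; lra.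
pose SK := [set W | Lsep W /\ forall i j, `|W i j| <= Mb].
have SK0 : SK 0.
  split; last by move=> i j; rewrite mxE normr0.
  by exists (fun=> 0), (fun=> 0); apply/matrixP => i j; rewrite !mxE addr0.
pose E := [set G W | W in SK].
have hsE : has_sup E.
  split; first by exists (G 0), 0.
  by exists (Phi P0) => _ [W _ <-]; exact: G_le.
pose s := sup E.
have sE W : SK W -> G W <= s.
  by move=> SW; apply: sup_upper_bound => //; exists W.
pose B e := [set W | SK W /\ s - e < G W].
pose Ff := filter_from [set e : R | 0 < e] B.
have FfF : Filter Ff.
  apply: filter_from_filter; first by exists 1 => /=.
  move=> e1 e2 e10 e20; exists (Order.min e1 e2); first by rewrite /= lt_min e10 e20.
  have m1 : Order.min e1 e2 <= e1 by rewrite ge_min lexx.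
  have m2 : Order.min e1 e2 <= e2 by rewrite ge_min lexx orbT.
  by move=> W [SW hW]; split; split => //; lra.
have FfP : ProperFilter Ff.
  apply: filter_from_proper => e e0.
  have [_ [W SW <-] lt] := sup_adherent e0 hsE.
  by exists W; split.
have Ffbox : Ff [set X | forall i j, `|X i j| <= Mb].
  by exists 1; [exact: ltr01 | move=> W [[_ bW] _]].
have [Wb [_ clW]] := @mx_box_compact R n m Mb Ff FfP Ffbox.
have hW i j : Wb i j + Wb i0 j0 - Wb i j0 - Wb i0 j = 0.
  have c1 : Wb i j + Wb i0 j0 - Wb i j0 - Wb i0 j <= 0.
    apply: (@cluster_le R n m Ff Wb
      (fun X => X i j + X i0 j0 - X i j0 - X i0 j) 0 _ clW).
      apply: continuousB; last exact: coord_continuous.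
      apply: continuousB; last exact: coord_continuous.
      by apply: continuousD; exact: coord_continuous.
    move=> e e0; exists 1; first exact: ltr01. move=> W [[[a [b ->]] _] _].
    by rewrite /= !mxE; lra.
  have c2 : - (Wb i j + Wb i0 j0 - Wb i j0 - Wb i0 j) <= 0.
    apply: (@cluster_le R n m Ff Wb
      (fun X => - (X i j + X i0 j0 - X i j0 - X i0 j)) 0 _ clW).
      apply: continuousN.
      apply: continuousB; last exact: coord_continuous.
      apply: continuousB; last exact: coord_continuous.
      by apply: continuousD; exact: coord_continuous.
    move=> e e0; exists 1; first exact: ltr01. move=> W [[[a [b ->]] _] _].
    by rewrite /= !mxE; lra.
  lra.
have LWb : Lsep Wb.
  exists (fun i => Wb i j0 - Wb i0 j0), (fun j => Wb i0 j).
  by apply/matrixP => i j; rewrite mxE; have := hW i j; lra.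
have GWb : s <= G Wb.
  have : dot (FU Wb - P0) Wb + (- Phi (FU Wb)) <= - s.
    apply: (@cluster_le R n m Ff Wb
      (fun X => dot (FU Wb - P0) X + (- Phi (FU Wb))) (- s) _ clW).
      apply: continuousD; first exact: dot_cont.
      exact: cst_continuous.
    move=> e e0; exists e => // W [SW hW2] /=.
    have := FY W (FU_simplex Wb); rewrite /G in hW2.
    rewrite dotBl (@dotC R n m (FU Wb)) (@dotC R n m P0); lra.
  rewrite /G /Phis dotBl (@dotC R n m (FU Wb)) (@dotC R n m P0); lra.
exists Wb; split => // W [a [b eW]].
pose c := dot W P0.
pose W' := W + (- c) *: one.
have LW' : Lsep W'.
  exists (fun i => a i - c), b; rewrite /W' eW.
  by apply/matrixP => i j; rewrite !mxE; ring.
have GW' : G W' = G W by exact: G_shift.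
have W'0 : dot W' P0 = 0.
  by rewrite /W' dotDl dot_one_simplex; [rewrite /c; lra | exact: P0_simplex].
rewrite -GW'.
case: (lerP (G 0) (G W')) => hG.
  have SW' : SK W' by split => //; exact: box.
  exact: le_trans (sE _ SW') GWb.
apply: le_trans (ltW hG) _; exact: le_trans (sE _ SK0) GWb.
Qed.

Lemma main_thm : exists Pstar : 'M[R]_(n, m),
    [/\ coupling p q Pstar,
        (forall P, coupling p q P -> Phi Pstar <= Phi P),
        (forall P, coupling p q P -> (forall Q, coupling p q Q -> Phi P <= Phi Q) ->
           P = Pstar) &
        exists (alpha : 'I_n -> R) (beta : 'I_m -> R),
          forall i j, gradmx Phi Pstar i j = alpha i + beta j].
Proof.
have [Wb [[a [b eWb]] Wmax]] := dual_max.
have dirle V : Lsep V -> dot V P0 <= dot V (FU Wb).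
  move=> [a' [b' eV]]; apply: key_dir => t /andP[t0 t1].
  have L' : Lsep (Wb + t *: V).
    exists (fun i => a i + t * a' i), (fun j => b j + t * b' j).
    by rewrite eWb eV; apply/matrixP => i j; rewrite !mxE; ring.
  have := Wmax _ L'; rewrite /G dotDl dotZl.
  have := FY Wb (FU_simplex (Wb + t *: V)).
  have e : Phis (Wb + t *: V) = dot Wb (FU (Wb + t *: V)) +
      t * dot V (FU (Wb + t *: V)) - Phi (FU (Wb + t *: V)).
    by rewrite /Phis dotDl dotZl.
  rewrite e => H1 H2; rewrite -(ler_pM2l t0); lra.
have deq V : Lsep V -> dot V (FU Wb) = dot V P0.
  move=> LV; apply/eqP; rewrite eq_le dirle // andbT.
  have LnV : Lsep (- V).
    case: LV => a' [b' ->]; exists (fun i => - a' i), (fun j => - b' j).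
    by apply/matrixP => i j; rewrite !mxE; ring.
  by have := dirle _ LnV; rewrite !dotNl; lra.
pose Ps := FU Wb.
have [rP0 cP0] : (forall i, \sum_j P0 i j = p i) /\ (forall j, \sum_i P0 i j = q j).
  by case: P0_coupling.
have zr (X : 'M[R]_(n, m)) : \sum_(j < m) (0 : R) * \sum_i X i j = 0.
  by rewrite big1 // => j _; rewrite mul0r.
have zl (X : 'M[R]_(n, m)) : \sum_(i < n) (0 : R) * \sum_j X i j = 0.
  by rewrite big1 // => j _; rewrite mul0r.
have cP : coupling p q Ps.
  split; first exact: FU_simplex.
  split.
    move=> i; rewrite -rP0.
    have LV : Lsep (sepmx (fun k => (k == i)%:R) (fun=> 0)).
      by exists (fun k => (k == i)%:R), (fun=> 0).
    by move: (deq _ LV); rewrite !dot_sepE /= !zr !addr0 !sep_sum1.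
  move=> j; rewrite -cP0.
  have LV : Lsep (sepmx (fun=> 0) (fun k => (k == j)%:R)).
    by exists (fun=> 0), (fun k => (k == j)%:R).
  by move: (deq _ LV); rewrite !dot_sepE /= !zl !add0r !sep_sum2.
have dS P : coupling p q P -> dot Wb P = \sum_i a i * p i + \sum_j b j * q j.
  by move=> cPP; rewrite eWb; exact: dot_sep_coupling.
have minP P : coupling p q P -> Phi Ps <= Phi P.
  move=> cPP; have := FY Wb (proj1 cPP).
  have : Phi Ps = dot Wb Ps - Phis Wb by rewrite /Phis /Ps; lra.
  rewrite (dS _ cPP) (dS _ cP); lra.
exists Ps; split => //.
  move=> P cPP Pmin; apply/eqP; apply/negPn/negP => neq.
  have h12 : 0 < (1 / 2 : R) < 1 by apply/andP; split; lra.
  have cM := coupling_comb cPP cP h12.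
  have := Hsconv (proj1 cPP) (proj1 cP) neq h12.
  have := Pmin _ cM; have := Pmin _ cP; have := minP _ cPP.
  lra.
have [c [_ gF]] := FU_spec Wb.
exists (fun i => a i + c), b => i j.
by rewrite /Ps gF eWb !mxE; ring.
Qed.

End Main.

Unset Implicit Arguments.

Theorem theorem2 (R : realType) (n m : nat) (Phi : 'M[R]_(n, m) -> R)
  (* differentiable on R_{++}^{n x m} *)
  (Hdiff : forall A, posmx A -> differentiable Phi A)
  (* convex on R_{++}^{n x m} *)
  (Hconv : forall (A B : 'M[R]_(n, m)) (t : R), posmx A -> posmx B ->
     0 <= t <= 1 ->
     Phi ((1 - t) *: A + t *: B) <= (1 - t) * Phi A + t * Phi B)
  (* positively 1-homogeneous *)
  (Hhom : forall (A : 'M[R]_(n, m)) (t : R), posmx A -> 0 < t ->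
     Phi (t *: A) = t * Phi A)
  (* strictly convex on P_{nm-1} *)
  (Hsconv : forall (A B : 'M[R]_(n, m)) (t : R), simplexmx A -> simplexmx B ->
     A != B -> 0 < t < 1 ->
     Phi ((1 - t) *: A + t *: B) < (1 - t) * Phi A + t * Phi B)
  (* A |-> [S(A)] is a bijection P_{nm-1} -> R^{n x m} / <1_{nm}> *)
  (Hinj : forall (A B : 'M[R]_(n, m)) (c : R), simplexmx A -> simplexmx B ->
     gradmx Phi A - gradmx Phi B = c *: const_mx 1 -> A = B)
  (Hsurj : forall U : 'M[R]_(n, m), exists A : 'M[R]_(n, m), exists c : R,
     simplexmx A /\ gradmx Phi A = U + c *: const_mx 1)
  (p : 'I_n -> R) (q : 'I_m -> R) (Hp : simplexv p) (Hq : simplexv q) :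
  exists Pstar : 'M[R]_(n, m),
    [/\ coupling p q Pstar,
        (forall P, coupling p q P -> Phi Pstar <= Phi P),
        (forall P, coupling p q P -> (forall Q, coupling p q Q -> Phi P <= Phi Q) ->
           P = Pstar) &
        exists (alpha : 'I_n -> R) (beta : 'I_m -> R),
          forall i j, gradmx Phi Pstar i j = alpha i + beta j].
Proof.
exact: (main_thm Hdiff Hconv Hsconv Hinj Hsurj Hp Hq).
Qed.
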